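(* Let $I$ be the edge graph of the regular icosahedron and $C$ the edge graph of the cube, both viewed as metric graphs with every edge of length $1$. There is no isometric covering $m:I\to C$.
   Context: A metric graph is viewed as a metric space in which each edge is a segment of its length, glued at the vertices. An isometric covering of $Y$ by $X$ is a surjective map $m:X\to Y$ such that, for every path $p$ in $X$, the arc length of $p$ equals the arc length of the curve $m(p)$ in $Y$, counted with multiplicity. *)

(* Defs.v *)
From HB Require Import structures.
From mathcomp Require Import all_boot all_order all_algebra.
From mathcomp Require Import classical_sets boolp reals ereal constructive_ereal.
Set Implicit Arguments. Unset Strict Implicit. Unset Printing Implicit Defensive.
Import Order.TTheory GRing.Theory Num.Theory.
Local Open Scope ring_scope.

(** A finite simple graph is given by a finType [V] and a symmetric
    irreflexive relation [adj].  Its metric graph has as points the vertices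
    and the interior points of the edges.  An interior point of the edge
    {u,v} is represented canonically as [MInner u v t] with
    [enum_rank u < enum_rank v] and [0 < t < 1], [t] being the distance to
    [u] along the edge (the edge is a segment of length 1). *)

Section MetricGraph.
Variables (V : finType) (adj : rel V) (R : realType).

Inductive mgpt := MVert of V | MInner of V & V & R.

Definition mg_valid (p : mgpt) : bool :=
  match p with
  | MVert _ => true
  | MInner u v t => [&& adj u v, (enum_rank u < enum_rank v)%N, 0 < t & t < 1]
  end.

Definition mgpoint := {p : mgpt | mg_valid p}.

Definition walk_len (n : nat) (u v : V) : bool :=
  [exists s : n.-tuple V, path adj u s && (last u s == v)].

(** combinatorial graph distance (#|V| if not connected) *)
Definition gdist (u v : V) : nat :=
  \big[minn/#|V|]_(n < #|V| | walk_len n u v) n.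

Definition mg_ends (p : mgpt) : seq (V * R) :=
  match p with
  | MVert v => [:: (v, 0)]
  | MInner u v t => [:: (u, t); (v, 1 - t)]
  end.

Definition mg_same_edge (p q : mgpt) : seq R :=
  match p, q with
  | MInner u v t, MInner u' v' t' =>
      if (u == u') && (v == v') then [:: `|t - t'|] else [::]
  | _, _ => [::]
  end.

Definition mg_dist_raw (p q : mgpt) : R :=
  let c := [seq a.2 + (gdist a.1 b.1)%:R + b.2 | a <- mg_ends p, b <- mg_ends q]
           ++ mg_same_edge p q in
  foldr Num.min (head 0 c) c.

Definition mg_dist (p q : mgpoint) : R := mg_dist_raw (val p) (val q).

End MetricGraph.

Section Curves.
Variables (R : realType) (T : Type) (d : T -> T -> R).

Definition is_path (g : R -> T) : Prop :=
  forall t, 0 <= t <= 1 -> forall eps : R, 0 < eps ->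
    exists2 delta : R, 0 < delta &
      forall t', 0 <= t' <= 1 -> `|t - t'| < delta -> d (g t) (g t') < eps.

(** arc length of a curve g : [0,1] -> T (sup over partitions), in \bar R;
    traversals are counted with multiplicity. *)
Definition arc_length (g : R -> T) : \bar R :=
  ereal_sup [set x : \bar R | exists (n : nat) (s : nat -> R),
    [/\ s 0%N = 0, s n = 1, (forall i, (i < n)%N -> s i <= s i.+1) &
        x = (\sum_(i < n) d (g (s i)) (g (s i.+1)))%:E]].
End Curves.

Definition isometric_covering (R : realType) (X Y : Type)
  (dX : X -> X -> R) (dY : Y -> Y -> R) (m : X -> Y) : Prop :=
  (forall y, exists x, m x = y) /\
  (forall p : R -> X, is_path dX p -> arc_length dX p = arc_length dY (m \o p)).

(** The icosahedron: vertex 0 (top), upper pentagon 1..5, lower pentagon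
    6..10, vertex 11 (bottom); upper i is joined to lower i+5 and i+4 (cyclically). *)
Definition ico_e (a b : nat) : bool :=
  [|| (a == 0%N) && (1 <= b <= 5)%N,
      (1 <= a <= 4)%N && (b == a.+1), (a == 1%N) && (b == 5%N),
      (6 <= a <= 9)%N && (b == a.+1), (a == 6%N) && (b == 10%N),
      (1 <= a <= 5)%N && (b == a + 5)%N,
      (2 <= a <= 5)%N && (b == a + 4)%N, (a == 1%N) && (b == 10%N)
    | (6 <= a <= 10)%N && (b == 11%N)].

Definition ico_adj : rel 'I_12 := fun u v => ico_e u v || ico_e v u.

Definition cube_adj : rel {ffun 'I_3 -> bool} :=
  fun f g => #|[set k | f k != g k]| == 1%N.

(* Main.v *)
Require Import Defs.
From mathcomp Require Import all_boot all_order all_algebra.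
From mathcomp Require Import classical_sets boolp reals ereal constructive_ereal.
From mathcomp Require Import zify ring lra.
Set Implicit Arguments. Unset Strict Implicit. Unset Printing Implicit Defensive.
Import Order.TTheory GRing.Theory Num.Theory.
Local Open Scope ring_scope.

Lemma int_cases (R : numDomainType) (j : int) :
  -2 < (j%:~R : R) -> (j%:~R : R) < 2 -> j = -1 \/ j = 0 \/ j = 1.
Proof.
move=> h1 h2.
have e2 : (2 : R) = (2 : int)%:~R by [].
have e3 : (-2 : R) = (-2 : int)%:~R by rewrite intrN.
rewrite e2 ltr_int in h2; rewrite e3 ltr_int in h1.
lia.
Qed.

Lemma absb (R : realDomainType) (x : R) : x <= `|x| /\ - x <= `|x|.
Proof. by split; [exact: ler_norm | rewrite -normrN; exact: ler_norm]. Qed.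

Definition dl {R : realType} (x y : R) : R :=
  if 2 <= y - x then y - x - 4 else if y - x < -2 then y - x + 4 else y - x.
Definition I4 {R : realType} (x : R) := (0 <= x) && (x < 4).

Section DL.
Variable R : realType.
Implicit Types x y z : R.

Lemma dl_cases x y : dl x y = y - x \/ dl x y = y - x - 4 \/ dl x y = y - x + 4.
Proof. rewrite /dl; case: ifP => _; [|case: ifP => _]; tauto. Qed.

Lemma dl_range x y : I4 x -> I4 y -> -2 <= dl x y /\ dl x y < 2.
Proof.
rewrite /I4 => /andP[? ?] /andP[? ?].
rewrite /dl; case: (lerP 2 (y - x)) => h1 /=; first by lra.
case: (ltrP (y - x) (-2)) => h2 /=; lra.
Qed.

Lemma dl_mod x y : exists k : int, dl x y = y - x + 4 * k%:~R.
Proof.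
case: (dl_cases x y) => [->|[->|->]].
- by exists 0; rewrite mulr0 addr0.
- by exists (-1)%R; rewrite intrN mulrN mulr1.
- by exists 1%R; rewrite mulr1.
Qed.

Lemma dl_self x : dl x x = 0.
Proof. rewrite /dl subrr; case: ifP; first by lra. case: ifP => //; lra. Qed.

Lemma dl3 x y z : exists j : int, dl x z - dl x y - dl y z = 4 * j%:~R.
Proof.
have [k1 e1] := dl_mod x y; have [k2 e2] := dl_mod y z; have [k3 e3] := dl_mod x z.
exists (k3 - k1 - k2); rewrite e1 e2 e3 !intrB; ring.
Qed.

Lemma dl_add x y z : I4 x -> I4 y -> I4 z ->
  `|dl x y| + `|dl y z| <= 1 -> dl x z = dl x y + dl y z.
Proof.
move=> hx hy hz h.
have [j ej] := dl3 x y z.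
have [r1 r2] := dl_range hx hz.
have [a1 a2] := absb (dl x y); have [b1 b2] := absb (dl y z).
have [?|[?|?]] : j = -1 \/ j = 0 \/ j = 1 by apply: (int_cases (R:=R)); lra.
all: subst j; rewrite ?intrN ?mulr0 ?mulrN ?mulr1 in ej; try lra.
Qed.

Lemma dl_tri x y z : I4 x -> I4 y -> I4 z ->
  `|dl x z| <= `|dl x y| + `|dl y z|.
Proof.
move=> hx hy hz.
have [j ej] := dl3 x y z.
have [r1 r2] := dl_range hx hz; have [r3 r4] := dl_range hx hy; have [r5 r6] := dl_range hy hz.
have [a1 a2] := absb (dl x y); have [b1 b2] := absb (dl y z).
have [c1 c2] : dl x z <= 2 /\ - dl x z <= 2 by lra.
have hc : `|dl x z| <= 2 by rewrite ler_norml; lra.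
have [?|[?|?]] : j = -1 \/ j = 0 \/ j = 1 by apply: (int_cases (R:=R)); lra.
all: subst j; rewrite ?intrN ?mulr0 ?mulrN ?mulr1 in ej; try lra.
have -> : dl x z = dl x y + dl y z by lra.
exact: ler_normD.
Qed.

Lemma dl_sym x y : I4 x -> I4 y -> `|dl y x| = `|dl x y|.
Proof.
move=> hx hy.
have [k1 e1] := dl_mod x y; have [k2 e2] := dl_mod y x.
have [r1 r2] := dl_range hx hy; have [r3 r4] := dl_range hy hx.
have : exists j : int, dl y x + dl x y = 4 * j%:~R.
  by exists (k1 + k2); rewrite e1 e2 intrD; ring.
case=> j ej.
have [?|[?|?]] : j = -1 \/ j = 0 \/ j = 1 by apply: (int_cases (R:=R)); lra.
all: subst j; rewrite ?intrN ?mulr0 ?mulrN ?mulr1 in ej; try lra.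
- have -> : dl y x = -2 by lra. have -> : dl x y = -2 by lra. by [].
- have -> : dl y x = - dl x y by lra. by rewrite normrN.
Qed.

Lemma dl_anti x y : I4 x -> I4 y -> `|dl x y| <= 1 -> dl y x = - dl x y.
Proof.
move=> hx hy h.
have [k1 e1] := dl_mod x y; have [k2 e2] := dl_mod y x.
have [r1 r2] := dl_range hx hy; have [r3 r4] := dl_range hy hx.
have [a1 a2] := absb (dl x y).
have : exists j : int, dl y x + dl x y = 4 * j%:~R.
  by exists (k1 + k2); rewrite e1 e2 intrD; ring.
case=> j ej.
have [?|[?|?]] : j = -1 \/ j = 0 \/ j = 1 by apply: (int_cases (R:=R)); lra.
all: subst j; rewrite ?intrN ?mulr0 ?mulrN ?mulr1 in ej; lra.
Qed.
End DL.


Notation cV := {ffun 'I_3 -> bool}.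
Definition i0 : 'I_3 := @Ordinal 3 0 isT.
Definition i1 : 'I_3 := @Ordinal 3 1 isT.
Definition qb (b0 b1 : bool) : nat :=
  if b0 then (if b1 then 2 else 1) else (if b1 then 3 else 0).
Definition q (f : cV) : nat := qb (f i0) (f i1).
Definition qadj (a b : nat) : bool :=
  [|| a == b, b == (a.+1 %% 4) | a == (b.+1 %% 4)]%N.

Lemma q_lt4 f : (q f < 4)%N.
Proof. by rewrite /q /qb; case: (f i0); case: (f i1). Qed.

Lemma cube_adj_q u v : cube_adj u v -> qadj (q u) (q v).
Proof.
move=> /eqP h.
have nb : ~~ ((u i0 != v i0) && (u i1 != v i1)).
  apply/negP => /andP[h0 h1].
  have : ([set i0; i1]%SET : {set _}) \subset [set k | u k != v k]%SET.
    by apply/fintype.subsetP => k; rewrite !inE => /orP[]/eqP->.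
  move/subset_leq_card; rewrite h cards2.
  by [].
move: nb; rewrite /q /qb.
by case: (u i0); case: (u i1); case: (v i0); case: (v i1).
Qed.

Lemma cube_adj_neq u v : cube_adj u v -> u != v.
Proof.
move=> /eqP h; apply/eqP => e; subst v.
move: h; have -> : [set k | u k != u k]%SET = finset.set0.
  by apply/setP => k; rewrite !inE eqxx.
by rewrite cards0.
Qed.

Definition th {R : realType} (p : mgpt cV R) : R := match p with
 | MVert v => (q v)%:R
 | MInner u v t =>
   if (q u == 0)%N && (q v == 3)%N then 4 - t
   else if (q u == 3)%N && (q v == 0)%N then 3 + t
   else (q u)%:R + t * ((q v)%:R - (q u)%:R) end.

Arguments th : simpl never.

Ltac qcase a b := case: a => [|[|[|[|a]]]]; case: b => [|[|[|[|b]]]] => //.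

Ltac i4 := rewrite /I4; apply/andP; split; lra.

Ltac dlb := match goal with |- context [dl ?x ?y] => rewrite ler_norml;
  move: (@dl_range _ x y ltac:(i4) ltac:(i4));
  case: (dl_cases x y) => [->|[->|->]] [? ?]; apply/andP; split; lra end.

Section Cube.
Variable R : realType.

Lemma q_I4 f : I4 ((q f)%:R : R).
Proof. by move: (q_lt4 f); case: (q f) => [|[|[|[|]]]] //= _; i4. Qed.

Lemma adj_dl u v : cube_adj u v -> `|dl ((q u)%:R : R) (q v)%:R| <= 1.
Proof.
move=> /cube_adj_q; move: (q_lt4 u) (q_lt4 v).
move: (q u) (q v) => a b; qcase a b => _ _ _; dlb.
Qed.


Lemma inner_I4 u v (t : R) : cube_adj u v -> 0 < t < 1 -> I4 (th (MInner u v t)).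
Proof.
move=> /cube_adj_q + /andP[t0 t1]; rewrite /th; move: (q_lt4 u) (q_lt4 v).
move: (q u) (q v) => a b; qcase a b => _ _ _ /=; i4.
Qed.

Lemma inner_l u v (t : R) : cube_adj u v -> 0 < t < 1 ->
  `|dl (th (MInner u v t)) (q u)%:R| <= t.
Proof.
move=> /cube_adj_q + /andP[t0 t1]; rewrite /th; move: (q_lt4 u) (q_lt4 v).
move: (q u) (q v) => a b; qcase a b => _ _ _ /=; dlb.
Qed.

Lemma inner_r u v (t : R) : cube_adj u v -> 0 < t < 1 ->
  `|dl (th (MInner u v t)) (q v)%:R| <= 1 - t.
Proof.
move=> /cube_adj_q + /andP[t0 t1]; rewrite /th; move: (q_lt4 u) (q_lt4 v).
move: (q u) (q v) => a b; qcase a b => _ _ _ /=; dlb.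
Qed.

Lemma inner_same u v (t t' : R) : cube_adj u v -> 0 < t < 1 -> 0 < t' < 1 ->
  `|dl (th (MInner u v t)) (th (MInner u v t'))| <= `|t - t'|.
Proof.
move=> /cube_adj_q + /andP[t0 t1] /andP[t2 t3]; rewrite /th; move: (q_lt4 u) (q_lt4 v).
have [a1 a2] := absb (t - t').
move: (q u) (q v) => a b; qcase a b => _ _ _ /=; dlb.
Qed.

Lemma inner_flip u v (t : R) : cube_adj u v ->
  th (MInner v u (1 - t)) = th (MInner u v t).
Proof.
move=> /cube_adj_q; rewrite /th; move: (q_lt4 u) (q_lt4 v).
move: (q u) (q v) => a b; qcase a b => _ _ _ /=; lra.
Qed.
End Cube.


Section Fold.
Variable R : realType.
Lemma foldr_min_ge_aux (L h0 : R) (c : seq R) : L <= h0 ->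
  (forall x, x \in c -> L <= x) -> L <= foldr Num.min h0 c.
Proof.
move=> hh; elim: c => //= y c IH H.
rewrite le_min; apply/andP; split; first by apply: H; exact: mem_head.
by apply: IH => x hx; apply: H; rewrite inE hx orbT.
Qed.

Lemma foldr_min_ge (L : R) (c : seq R) : c != [::] ->
  (forall x, x \in c -> L <= x) -> L <= foldr Num.min (head 0 c) c.
Proof.
case: c => // y c _ H; apply: foldr_min_ge_aux => //; apply: H; exact: mem_head.
Qed.

Lemma foldr_min_le_aux (x h0 : R) (c : seq R) : x \in c -> foldr Num.min h0 c <= x.
Proof.
elim: c => //= y c IH; rewrite inE => /predU1P[->|hx]; rewrite ge_min ?lexx //.
by rewrite IH ?orbT.
Qed.

Lemma foldr_min_le (x : R) (c : seq R) : x \in c -> foldr Num.min (head 0 c) c <= x.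
Proof. exact: foldr_min_le_aux. Qed.
End Fold.

Section CubeLip.
Variable R : realType.

Lemma walk_dl (s : seq cV) u : path cube_adj u s ->
  `|dl ((q u)%:R : R) (q (last u s))%:R| <= (size s)%:R.
Proof.
elim: s u => [|v s IH] u /=.
  by rewrite dl_self normr0.
move=> /andP[huv hp].
have h1 := adj_dl R huv; have h2 := IH v hp.
have := dl_tri (q_I4 R u) (q_I4 R v) (q_I4 R (last v s)).
rewrite mulrS; lra.
Qed.

Lemma card_cV : #|{ffun 'I_3 -> bool}| = 8%N.
Proof. by rewrite card_ffun card_bool card_ord. Qed.

Lemma gdist_dl u v : `|dl ((q u)%:R : R) (q v)%:R| <= (gdist cube_adj u v)%:R.
Proof.
rewrite /gdist; apply: (big_ind (fun n : nat => `|dl ((q u)%:R : R) (q v)%:R| <= n%:R)).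
- rewrite card_cV; have [r1 r2] := dl_range (q_I4 R u) (q_I4 R v).
  rewrite ler_norml; apply/andP; split; lra.
- by move=> a b ha hb; rewrite /minn; case: ifP.
- move=> [n /= _] /existsP[s /andP[hp /eqP hl]].
  by have := walk_dl hp; rewrite hl size_tuple.
Qed.

Lemma cand (X Y : R) a b (s s' : R) : I4 X -> I4 Y ->
  `|dl X (q a)%:R| <= s -> `|dl Y (q b)%:R| <= s' ->
  `|dl X Y| <= s + (gdist cube_adj a b)%:R + s'.
Proof.
move=> hX hY h1 h2.
have t1 := dl_tri hX (q_I4 R a) hY.
have t2 := dl_tri (q_I4 R a) (q_I4 R b) hY.
have g := gdist_dl a b.
have sy := dl_sym hY (q_I4 R b).
lra.
Qed.

Lemma th_I4 (x : mgpt cV R) : mg_valid cube_adj x -> I4 (th x).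
Proof.
case: x => [v|u v t] /=; first by move=> _; exact: q_I4.
by move=> /and4P[h _ t0 t1]; apply: inner_I4 => //; rewrite t0 t1.
Qed.

Lemma cube_lip (x y : mgpt cV R) : mg_valid cube_adj x -> mg_valid cube_adj y ->
  `|dl (th x) (th y)| <= mg_dist_raw cube_adj x y.
Proof.
move=> hx hy; have Ix := th_I4 hx; have Iy := th_I4 hy.
rewrite /mg_dist_raw; apply: foldr_min_ge.
  by case: x hx {Ix} => [?|? ? ?]; case: y hy {Iy} => [?|? ? ?].
move=> z.
have e0 : forall w : cV, `|dl ((q w)%:R : R) (q w)%:R| <= 0.
  by move=> w; rewrite dl_self normr0.
case: x hx Ix => [u|u v t] /=.
- move=> _ Ix; case: y hy Iy => [u'|u' v' t'] /=.
  + move=> _ Iy; rewrite inE => /eqP->.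
    by have := cand Ix Iy (e0 u) (e0 u'); rewrite /=.
  + move=> /and4P[ha _ t0 t1] Iy; have t01 : 0 < t' < 1 by rewrite t0 t1.
    rewrite !inE => /orP[]/eqP->.
    * apply: cand => //; first by rewrite /= dl_self normr0. exact: inner_l.
    * apply: cand => //; first by rewrite /= dl_self normr0. exact: inner_r.
- move=> /and4P[ha _ t0 t1] Ix; have t01 : 0 < t < 1 by rewrite t0 t1.
  case: y hy Iy => [u'|u' v' t'] /=.
  + move=> _ Iy; rewrite !inE => /orP[]/eqP->.
    * apply: cand => //; [exact: inner_l|by rewrite /= dl_self normr0].
    * apply: cand => //; [exact: inner_r|by rewrite /= dl_self normr0].
  + move=> /and4P[ha' _ t0' t1'] Iy; have t01' : 0 < t' < 1 by rewrite t0' t1'.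
    rewrite !inE => /orP[/eqP->|/orP[/eqP->|/orP[/eqP->|/orP[/eqP->|]]]];
      try (apply: cand => //; solve [exact: inner_l | exact: inner_r]).
    case: ifP => // /andP[/eqP eu /eqP ev]; subst u' v'.
    rewrite inE => /eqP->; exact: inner_same.
Qed.
End CubeLip.


Lemma bigmin_le_seq (I : eqType) (r : seq I) (P : pred I) (F : I -> nat) (x : nat) (j : I) :
  j \in r -> P j -> (\big[minn/x]_(i <- r | P i) F i <= F j)%N.
Proof.
elim: r => // a r IH; rewrite inE big_cons => /predU1P[<-|/IH h] Pj.
  by rewrite Pj geq_min leqnn.
by case: ifP => _; rewrite ?geq_min h ?orbT // Pj.
Qed.

Lemma gdist0 (V : finType) (adj : rel V) u : gdist adj u u = 0%N.
Proof.
apply/eqP; rewrite -leqn0.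
have h0 : (0 < #|V|)%N by apply/card_gt0P; exists u.
rewrite /gdist; apply: (leq_trans (@bigmin_le_seq _ _ _ _ _ (Ordinal h0) _ _)) => //.
  exact: mem_index_enum.
by apply/existsP; exists [tuple]; rewrite /= eqxx.
Qed.

Lemma gdist1 (V : finType) (adj : rel V) u v : (1 < #|V|)%N -> adj u v ->
  (gdist adj u v <= 1)%N.
Proof.
move=> h1 huv.
rewrite /gdist; apply: (leq_trans (@bigmin_le_seq _ _ _ _ _ (Ordinal h1) _ _)) => //.
  exact: mem_index_enum.
by apply/existsP; exists [tuple v]; rewrite /= huv eqxx.
Qed.

Section ISide.
Variable R : realType.
Notation iP := (mgpoint ico_adj R).
Notation dI := (@mg_dist _ ico_adj R).
Notation dC := (@mg_dist _ cube_adj R).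
Local Notation MVert v := (@MVert _ R v).

Definition mV (v : 'I_12) : iP := exist _ (MVert v) isT.

Definition ipt (u v : 'I_12) (t : R) : iP :=
  if t <= 0 then mV u else if 1 <= t then mV v else insubd (mV u) (MInner u v t).

Lemma ipt0 u v : ipt u v 0 = mV u.
Proof. by rewrite /ipt lexx. Qed.

Lemma ipt1 u v : ipt u v 1 = mV v.
Proof. by rewrite /ipt ler10 lexx. Qed.

Lemma ipt_inner u v t : ico_adj u v -> (enum_rank u < enum_rank v)%N -> 0 < t < 1 ->
  val (ipt u v t) = MInner u v t.
Proof.
move=> huv hr /andP[t0 t1].
rewrite /ipt (lt_geF t0) (lt_geF t1) insubdK //.
by rewrite unfold_in /= huv hr t0 t1.
Qed.

Lemma card12 : (1 < #|'I_12|)%N. Proof. by rewrite card_ord. Qed.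

Lemma distI u v (a b : R) : ico_adj u v -> (enum_rank u < enum_rank v)%N ->
  0 <= a <= 1 -> 0 <= b <= 1 -> dI (ipt u v a) (ipt u v b) <= `|a - b|.
Proof.
move=> huv hr ha hb.
have hvu : ico_adj v u by rewrite /ico_adj orbC.
have cases : forall c : R, 0 <= c <= 1 ->
    [\/ c = 0 /\ val (ipt u v c) = MVert u,
        0 < c < 1 /\ val (ipt u v c) = MInner u v c |
        c = 1 /\ val (ipt u v c) = MVert v].
  move=> c /andP[c0 c1].
  case: (ltrP 0 c) => hc0; last first.
    have -> : c = 0 by lra.
    by apply: Or31; rewrite ipt0.
  case: (ltrP c 1) => hc1; last first.
    have -> : c = 1 by lra.
    by apply: Or33; rewrite ipt1.
  by apply: Or32; split => //; apply: ipt_inner => //; rewrite hc0 hc1.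
have g0 : forall w, (gdist ico_adj w w)%:R = 0 :> R by move=> w; rewrite gdist0.
have g1 : forall w w', ico_adj w w' -> (gdist ico_adj w w')%:R <= 1 :> R.
  by move=> w w' hw; rewrite lern1; apply: gdist1 => //; exact: card12.
rewrite /mg_dist.
have [a1 a2] := absb (a - b); move: a1 a2.
case: (cases a ha) => [[-> ->]|[a01 ->]|[-> ->]];
case: (cases b hb) => [[-> ->]|[b01 ->]|[-> ->]]; move=> a1 a2; rewrite /mg_dist_raw; cbv zeta.
- apply: (le_trans (foldr_min_le_aux (x := 0 + (gdist ico_adj u u)%:R + 0) _ _)).
    by rewrite /= !inE eqxx.
  by rewrite g0; lra.
- apply: (le_trans (foldr_min_le_aux (x := 0 + (gdist ico_adj u u)%:R + b) _ _)).
    by rewrite /= !inE eqxx.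
  by rewrite g0; lra.
- apply: (le_trans (foldr_min_le_aux (x := 0 + (gdist ico_adj u v)%:R + 0) _ _)).
    by rewrite /= !inE eqxx.
  by have := g1 _ _ huv; lra.
- apply: (le_trans (foldr_min_le_aux (x := a + (gdist ico_adj u u)%:R + 0) _ _)).
    by rewrite /= !inE eqxx.
  by rewrite g0; lra.
- idtac.
  apply: (le_trans (foldr_min_le_aux (x := `|a - b|) _ _)) => //.
  by rewrite /= !eqxx /= !inE eqxx !orbT.
- apply: (le_trans (foldr_min_le_aux (x := (1 - a) + (gdist ico_adj v v)%:R + 0) _ _)).
    by rewrite /= !inE eqxx !orbT.
  by rewrite g0; lra.
- apply: (le_trans (foldr_min_le_aux (x := 0 + (gdist ico_adj v u)%:R + 0) _ _)).
    by rewrite /= !inE eqxx.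
  by have := g1 _ _ hvu; lra.
- apply: (le_trans (foldr_min_le_aux (x := 0 + (gdist ico_adj v v)%:R + (1 - b)) _ _)).
    by rewrite /= !inE eqxx !orbT.
  by rewrite g0; lra.
- apply: (le_trans (foldr_min_le_aux (x := 0 + (gdist ico_adj v v)%:R + 0) _ _)).
    by rewrite /= !inE eqxx.
  by rewrite g0; lra.
Qed.
End ISide.


Section Arc.
Variable R : realType.

Lemma mono_bounds (s : nat -> R) n : s 0%N = 0 -> s n = 1 ->
  (forall i, (i < n)%N -> s i <= s i.+1) -> forall i, (i <= n)%N -> 0 <= s i <= 1.
Proof.
move=> s0 sn mono.
have up : forall i, (i <= n)%N -> s 0%N <= s i.
  elim=> [|i IH] hi; first exact: lexx.
  apply: le_trans (IH (ltnW hi)) (mono _ hi).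
have dn : forall k i, (i + k = n)%N -> s i <= s n.
  elim=> [|k IH] i hk; first by rewrite addn0 in hk; rewrite hk.
  apply: le_trans (mono i _) (IH i.+1 _); first by rewrite -hk; lia.
  by rewrite -hk; lia.
move=> i hi; apply/andP; split; first by rewrite -s0; exact: up.
by rewrite -sn; apply: (dn (n - i)%N); lia.
Qed.

Lemma arc_ub (T : Type) (d : T -> T -> R) (g : R -> T) :
  (forall a b, 0 <= a <= 1 -> 0 <= b <= 1 -> d (g a) (g b) <= `|a - b|) ->
  (arc_length d g <= 1%:E)%E.
Proof.
move=> H; rewrite /arc_length; apply: ge_ereal_sup => x [n [s [s0 sn mono ->]]].
rewrite lee_fin.
have bnd := mono_bounds s0 sn mono.
apply: (le_trans (y := \sum_(i < n) (s i.+1 - s i))).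
  apply: ler_sum => i _.
  have hi := ltn_ord i.
  apply: le_trans (H _ _ (bnd _ (ltnW hi)) (bnd _ hi)) _.
  rewrite distrC ger0_norm ?subr_ge0 //; exact: mono.
rewrite -(big_mkord xpredT (fun i => s i.+1 - s i)) telescope_sumr // sn s0 subr0.
exact: lexx.
Qed.

Lemma arc_lb (T : Type) (d : T -> T -> R) (g : R -> T) (t : R) : 0 <= t <= 1 ->
  ((d (g 0) (g t) + d (g t) (g 1))%:E <= arc_length d g)%E.
Proof.
move=> /andP[t0 t1]; rewrite /arc_length; apply: ereal_sup_ubound.
exists 2%N, (fun i : nat => if i == 0%N then 0 else if i == 1%N then t else 1).
split => //.
  by case=> [|[|]] //= _.
by rewrite !big_ord_recr big_ord0 /= add0r.
Qed.
End Arc.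

Section Edge.
Variable R : realType.
Notation iP := (mgpoint ico_adj R).
Notation cP := (mgpoint cube_adj R).
Notation dI := (@mg_dist _ ico_adj R).
Notation dC := (@mg_dist _ cube_adj R).

Lemma ipt_path u v : ico_adj u v -> (enum_rank u < enum_rank v)%N ->
  is_path dI (ipt (R:=R) u v).
Proof.
move=> huv hr t ht eps he; exists eps => // t' ht' hd.
exact: le_lt_trans (distI huv hr ht ht') hd.
Qed.

Lemma edge_ineq (m : iP -> cP) : isometric_covering dI dC m ->
  forall u v, ico_adj u v -> (enum_rank u < enum_rank v)%N ->
  forall s : R, 0 <= s <= 1 ->
  dC (m (mV R u)) (m (ipt u v s)) + dC (m (ipt u v s)) (m (mV R v)) <= 1.
Proof.
move=> [_ Hiso] u v huv hr s hs.
have hp := ipt_path huv hr.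
have e := Hiso _ hp.
have ub := arc_ub (g := ipt u v) (fun a b ha hb => distI huv hr ha hb).
have lb := arc_lb dC (m \o ipt u v) hs.
rewrite /= ipt0 ipt1 in lb.
by rewrite -lee_fin; apply: (le_trans lb); rewrite -e.
Qed.
End Edge.


Definition adjn (a b : nat) := ico_e a b || ico_e b a.
Definition r12 := iota 0 12.
Definition G1 a c := (a == c) || adjn a c.
Definition G2 a c := G1 a c || has (fun b => adjn a b && adjn b c) r12.
Definition Cond a b c d :=
  [|| G1 a c, G1 a d, G1 b c, G1 b d, (G2 a d && G2 b c) | (G2 a c && G2 b d)].

Lemma condall : all (fun a => all (fun b => adjn a b ==>
  all (fun c => all (fun d => adjn c d ==> Cond a b c d) r12) r12) r12) r12.
Proof. by vm_compute. Qed.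

Definition nb (a : nat) : nat :=
  if (1 <= a <= 5)%N then 0 else if a == 0%N then 1 else if a == 11%N then 6 else 11.

Lemma nball : all (fun a => adjn a (nb a) && ~~ adjn a a) r12.
Proof. by vm_compute. Qed.

Lemma in12 (a : 'I_12) : (nat_of_ord a) \in r12.
Proof. by rewrite mem_iota add0n ltn_ord. Qed.

Lemma Cond_ok (a b c d : 'I_12) : ico_adj a b -> ico_adj c d -> Cond a b c d.
Proof.
move=> hab hcd.
have := allP condall _ (in12 a) => /allP /(_ _ (in12 b)) /implyP /(_ hab).
by move=> /allP /(_ _ (in12 c)) /allP /(_ _ (in12 d)) /implyP /(_ hcd).
Qed.

Section Misc.
Variable R : realType.

Lemma dl_add3 (x y z : R) : I4 x -> I4 y -> I4 z ->
  `|dl x y| <= 1 -> `|dl y z| <= 1 -> `|dl x z| <= 1 -> dl x z = dl x y + dl y z.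
Proof.
move=> hx hy hz h1 h2 h3.
have [j ej] := dl3 x y z.
have [a1 a2] := absb (dl x y); have [b1 b2] := absb (dl y z); have [c1 c2] := absb (dl x z).
have [?|[?|?]] : j = -1 \/ j = 0 \/ j = 1 by apply: (int_cases (R:=R)); lra.
all: subst j; rewrite ?intrN ?mulr0 ?mulrN ?mulr1 in ej; lra.
Qed.

Lemma stepA (x y z lx ly lz : R) : I4 x -> I4 y -> I4 z ->
  `|dl x y| <= 1 -> `|dl y z| <= 1 -> `|dl x z| <= 1 ->
  ly - lx = dl x y -> lz - lx = dl x z -> lz - ly = dl y z.
Proof. move=> hx hy hz h1 h2 h3; have := dl_add3 hx hy hz h1 h2 h3; lra. Qed.

Lemma stepB (x y z lx ly lz : R) : I4 x -> I4 y -> I4 z ->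
  `|dl x y| <= 1 -> `|dl y z| <= 1 -> `|dl x z| <= 1 ->
  ly - lx = dl x y -> lz - ly = dl y z -> lz - lx = dl x z.
Proof. move=> hx hy hz h1 h2 h3; have := dl_add3 hx hy hz h1 h2 h3; lra. Qed.

Lemma modstep (X Y lp lc : R) : (exists k : int, lp = X + 4 * k%:~R) ->
  lc = lp + dl X Y -> exists k : int, lc = Y + 4 * k%:~R.
Proof.
move=> [k ek] ->; have [j ej] := dl_mod X Y.
by exists (k + j); rewrite ek ej intrD; ring.
Qed.

Lemma int_eq (j1 j2 : int) : -1 < (j1%:~R - j2%:~R : R) -> (j1%:~R - j2%:~R : R) < 1 -> j1 = j2.
Proof.
rewrite -intrB => h1 h2.
have h3 : ((- (j1 - j2))%:~R : R) < 1 by rewrite intrN; lra.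
rewrite ltrz1 in h2; rewrite ltrz1 in h3; lia.
Qed.
End Misc.

Definition f00 : cV := [ffun i => false].
Definition f10 : cV := [ffun i => i == i0].
Definition f11 : cV := [ffun i => (i == i0) || (i == i1)].
Definition f01 : cV := [ffun i => i == i1].

Lemma qf00 : q f00 = 0%N. Proof. by rewrite /q !ffunE. Qed.
Lemma qf10 : q f10 = 1%N. Proof. by rewrite /q !ffunE. Qed.
Lemma qf11 : q f11 = 2%N. Proof. by rewrite /q !ffunE. Qed.
Lemma qf01 : q f01 = 3%N. Proof. by rewrite /q !ffunE. Qed.

Lemma I3cases (k : 'I_3) : k = i0 \/ k = i1 \/ k = @Ordinal 3 2 isT.
Proof.
case: k => [[|[|[|k]]] hk]; [left|right;left|right;right|by []];
  by apply/val_inj.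
Qed.

Lemma adj1 (f g : cV) (k0 : 'I_3) : (forall k, (f k != g k) = (k == k0)) -> cube_adj f g.
Proof.
move=> H; rewrite /cube_adj.
have -> : [set k | f k != g k]%SET = [set k0]%SET by apply/setP => k; rewrite !inE H.
by rewrite cards1.
Qed.

Lemma adj_a : cube_adj f00 f10.
Proof. apply: (adj1 (k0 := i0)) => k; rewrite !ffunE; by case: (I3cases k) => [->|[->|->]]. Qed.
Lemma adj_b : cube_adj f10 f11.
Proof. apply: (adj1 (k0 := i1)) => k; rewrite !ffunE; by case: (I3cases k) => [->|[->|->]]. Qed.
Lemma adj_c : cube_adj f11 f01.
Proof. apply: (adj1 (k0 := i0)) => k; rewrite !ffunE; by case: (I3cases k) => [->|[->|->]]. Qed.
Lemma adj_d : cube_adj f01 f00.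
Proof. apply: (adj1 (k0 := i1)) => k; rewrite !ffunE; by case: (I3cases k) => [->|[->|->]]. Qed.

Lemma cube_adj_sym (f g : cV) : cube_adj f g -> cube_adj g f.
Proof.
rewrite /cube_adj.
have -> : [set k | g k != f k]%SET = [set k | f k != g k]%SET.
  by apply/setP => k; rewrite !inE eq_sym.
by [].
Qed.

Section Targets.
Variable R : realType.
Notation cP := (mgpoint cube_adj R).

Lemma target_pt (u v : cV) (t : R) : cube_adj u v -> 0 < t < 1 ->
  exists z : cP, th (val z) = th (MInner u v t).
Proof.
move=> huv /andP[t0 t1].
have hvu := cube_adj_sym huv.
have hne : enum_rank u != enum_rank v.
  by apply: contra (cube_adj_neq huv) => /eqP/enum_rank_inj ->.
case: (ltngtP (enum_rank u) (enum_rank v)) => hr.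
- have hv : mg_valid cube_adj (MInner u v t) by rewrite /= huv hr t0 t1.
  by exists (exist (fun p => mg_valid cube_adj p) _ hv).
- have hv : mg_valid cube_adj (MInner v u (1 - t)).
    rewrite /= hvu hr /=; apply/andP; split; lra.
  by exists (exist (fun p => mg_valid cube_adj p) _ hv); rewrite /= inner_flip.
- by move: hne; rewrite -val_eqE /= hr eqxx.
Qed.

Lemma target_vert : exists z : cP, th (val z) = 0.
Proof. by exists (exist _ (@MVert _ R f00) isT); rewrite /th /= qf00. Qed.

Lemma targets : [/\ exists z : cP, th (val z) = 0,
  exists z : cP, th (val z) = 4/5, exists z : cP, th (val z) = 8/5,
  exists z : cP, th (val z) = 12/5 & exists z : cP, th (val z) = 16/5].
Proof.
split; first exact: target_vert.
- have [z ez] := target_pt (t := 4/5) adj_a ltac:(apply/andP; split; lra).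
  by exists z; rewrite ez /th qf00 qf10 /=; lra.
- have [z ez] := target_pt (t := 3/5) adj_b ltac:(apply/andP; split; lra).
  by exists z; rewrite ez /th qf10 qf11 /=; lra.
- have [z ez] := target_pt (t := 2/5) adj_c ltac:(apply/andP; split; lra).
  by exists z; rewrite ez /th qf11 qf01 /=; lra.
- have [z ez] := target_pt (t := 1/5) adj_d ltac:(apply/andP; split; lra).
  by exists z; rewrite ez /th qf01 qf00 /=; lra.
Qed.
End Targets.


Arguments dl : simpl never.

Lemma irr12 (a : 'I_12) : ~~ ico_adj a a.
Proof. by have /andP[_ ->] := allP nball _ (in12 a). Qed.

Lemma nb_lt a : (nb a < 12)%N.
Proof. by rewrite /nb; repeat case: ifP. Qed.

Lemma nb_adj (a : 'I_12) : ico_adj a (inord (nb a)).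
Proof.
have /andP[h _] := allP nball _ (in12 a).
by rewrite /ico_adj inordK ?nb_lt.
Qed.

Lemma ico_adj_sym (a b : 'I_12) : ico_adj a b = ico_adj b a.
Proof. by rewrite /ico_adj orbC. Qed.

Lemma rank_neq (a b : 'I_12) : ico_adj a b -> enum_rank a != enum_rank b.
Proof.
move=> hab; apply/negP => /eqP/enum_rank_inj e; subst b.
by move: (irr12 a); rewrite hab.
Qed.

Section Main.
Variable R : realType.
Notation iP := (mgpoint ico_adj R).
Notation cP := (mgpoint cube_adj R).
Notation dI := (@mg_dist _ ico_adj R).
Notation dC := (@mg_dist _ cube_adj R).
Variable m : iP -> cP.
Hypothesis H : isometric_covering dI dC m.

Definition thp (z : cP) : R := th (val z).
Lemma thp_I4 z : I4 (thp z). Proof. exact: th_I4 (valP z). Qed.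
Lemma lipC (x y : cP) : `|dl (thp x) (thp y)| <= dC x y.
Proof. exact: cube_lip (valP x) (valP y). Qed.

Definition Th (a : 'I_12) : R := thp (m (mV R a)).

Lemma edge_dl (a b : 'I_12) (s : R) : ico_adj a b -> (enum_rank a < enum_rank b)%N ->
  0 <= s <= 1 ->
  `|dl (Th a) (thp (m (ipt a b s)))| + `|dl (thp (m (ipt a b s))) (Th b)| <= 1.
Proof.
move=> hab hr hs; have := edge_ineq H hab hr hs.
have := lipC (m (mV R a)) (m (ipt a b s)); have := lipC (m (ipt a b s)) (m (mV R b)).
rewrite /Th; lra.
Qed.

Lemma adjO (a b : 'I_12) : ico_adj a b -> `|dl (Th a) (Th b)| <= 1.
Proof.
move=> hab; have hne := rank_neq hab.
have hba : ico_adj b a by rewrite ico_adj_sym.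
have h01 : 0 <= (1 : R) <= 1 by apply/andP; split; lra.
case: (ltngtP (enum_rank a) (enum_rank b)) => hr.
- have := edge_dl hab hr h01; rewrite ipt1 -/(Th b) dl_self normr0 => h.
  have := normr_ge0 (dl (Th a) (Th b)); lra.
- have := edge_dl hba hr h01; rewrite ipt1 -/(Th a) dl_self normr0 => h.
  rewrite -dl_sym ?thp_I4 //; have := normr_ge0 (dl (Th b) (Th a)); lra.
- by move: hne; rewrite -val_eqE /= hr eqxx.
Qed.

Lemma Rep (w : iP) : exists a b : 'I_12, ico_adj a b /\
  `|dl (Th a) (thp (m w))| + `|dl (thp (m w)) (Th b)| <= 1.
Proof.
case: w => [[v|u v t] hp].
- have -> : exist _ (MVert R v) hp = mV R v by apply: val_inj.
  set b : 'I_12 := inord (nb v).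
  have hvb : ico_adj v b := nb_adj v.
  have hbv : ico_adj b v by rewrite ico_adj_sym.
  have hne := rank_neq hvb.
  case: (ltngtP (enum_rank v) (enum_rank b)) => hr.
  + exists v, b; split => //.
    have h0 : 0 <= (0 : R) <= 1 by apply/andP; split; lra.
    by have := edge_dl hvb hr h0; rewrite ipt0.
  + exists b, v; split => //.
    have h1 : 0 <= (1 : R) <= 1 by apply/andP; split; lra.
    by have := edge_dl hbv hr h1; rewrite ipt1.
  + by move: hne; rewrite -val_eqE /= hr eqxx.
- have hp2 : [&& ico_adj u v, (enum_rank u < enum_rank v)%N, 0 < t & t < 1] := hp.
  case/and4P: hp2 => huv hr t0 t1.
  have -> : exist _ (MInner u v t) hp = ipt u v t.
    by apply: val_inj; rewrite /= ipt_inner // t0 t1.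
  exists u, v; split => //; apply: edge_dl => //.
  by apply/andP; split; apply: ltW.
Qed.
End Main.


Arguments dl : simpl never.

Section Lift.
Variable R : realType.
Notation iP := (mgpoint ico_adj R).
Notation cP := (mgpoint cube_adj R).
Notation dI := (@mg_dist _ ico_adj R).
Notation dC := (@mg_dist _ cube_adj R).
Variable m : iP -> cP.
Hypothesis H : isometric_covering dI dC m.

Definition T (n : nat) : R := Th m (inord n).
Arguments T : simpl never.

Lemma T_I4 n : I4 (T n). Proof. exact: thp_I4. Qed.

Lemma adjT i j : (i < 12)%N -> (j < 12)%N -> adjn i j -> `|dl (T i) (T j)| <= 1.
Proof.
move=> hi hj hij; apply: adjO H _ _ _.
by rewrite /ico_adj !inordK.
Qed.

Definition ellU (k : nat) : R := T 0 + dl (T 0) (T k).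
Definition ell (n : nat) : R :=
  match n with
  | 0 => T 0
  | 6 => ellU 1 + dl (T 1) (T 6)
  | 7 => ellU 2 + dl (T 2) (T 7)
  | 8 => ellU 3 + dl (T 3) (T 8)
  | 9 => ellU 4 + dl (T 4) (T 9)
  | 10 => ellU 5 + dl (T 5) (T 10)
  | 11 => (ellU 1 + dl (T 1) (T 6)) + dl (T 6) (T 11)
  | k => ellU k
  end.

Ltac sA x y z := apply: (@stepA _ (T x) (T y) (T z) (ell x));
  [exact: T_I4 | exact: T_I4 | exact: T_I4
  | exact: (adjT (i:=x) (j:=y))| exact: (adjT (i:=y) (j:=z)) | exact: (adjT (i:=x) (j:=z))
  | by [] | by []].

Lemma Lor i j : (i < 12)%N -> (j < 12)%N -> ico_e i j -> ell j - ell i = dl (T i) (T j).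
Proof.
have d : forall x y : R, (x + y) - x = y by move=> x y; ring.
have L01 : ell 1 - ell 0 = dl (T 0) (T 1) by apply: d.
have L02 : ell 2 - ell 0 = dl (T 0) (T 2) by apply: d.
have L03 : ell 3 - ell 0 = dl (T 0) (T 3) by apply: d.
have L04 : ell 4 - ell 0 = dl (T 0) (T 4) by apply: d.
have L05 : ell 5 - ell 0 = dl (T 0) (T 5) by apply: d.
have L16 : ell 6 - ell 1 = dl (T 1) (T 6) by apply: d.
have L27 : ell 7 - ell 2 = dl (T 2) (T 7) by apply: d.
have L38 : ell 8 - ell 3 = dl (T 3) (T 8) by apply: d.
have L49 : ell 9 - ell 4 = dl (T 4) (T 9) by apply: d.
have L510 : ell 10 - ell 5 = dl (T 5) (T 10) by apply: d.
have L611 : ell 11 - ell 6 = dl (T 6) (T 11) by apply: d.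
have L12 : ell 2 - ell 1 = dl (T 1) (T 2) by sA 0%N 1%N 2%N.
have L23 : ell 3 - ell 2 = dl (T 2) (T 3) by sA 0%N 2%N 3%N.
have L34 : ell 4 - ell 3 = dl (T 3) (T 4) by sA 0%N 3%N 4%N.
have L45 : ell 5 - ell 4 = dl (T 4) (T 5) by sA 0%N 4%N 5%N.
have L15 : ell 5 - ell 1 = dl (T 1) (T 5) by sA 0%N 1%N 5%N.
have L110 : ell 10 - ell 1 = dl (T 1) (T 10).
  apply: (@stepB _ (T 1) (T 5) (T 10) _ (ell 5));
  [exact: T_I4 | exact: T_I4 | exact: T_I4
  | exact: (adjT (i:=1) (j:=5))| exact: (adjT (i:=5) (j:=10)) | exact: (adjT (i:=1) (j:=10))
  | by [] | by []].
have L26 : ell 6 - ell 2 = dl (T 2) (T 6) by sA 1%N 2%N 6%N.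
have L37 : ell 7 - ell 3 = dl (T 3) (T 7) by sA 2%N 3%N 7%N.
have L48 : ell 8 - ell 4 = dl (T 4) (T 8) by sA 3%N 4%N 8%N.
have L59 : ell 9 - ell 5 = dl (T 5) (T 9) by sA 4%N 5%N 9%N.
have L67 : ell 7 - ell 6 = dl (T 6) (T 7) by sA 2%N 6%N 7%N.
have L78 : ell 8 - ell 7 = dl (T 7) (T 8) by sA 3%N 7%N 8%N.
have L89 : ell 9 - ell 8 = dl (T 8) (T 9) by sA 4%N 8%N 9%N.
have L910 : ell 10 - ell 9 = dl (T 9) (T 10) by sA 5%N 9%N 10%N.
have L610 : ell 10 - ell 6 = dl (T 6) (T 10) by sA 1%N 6%N 10%N.
have L711 : ell 11 - ell 7 = dl (T 7) (T 11) by sA 6%N 7%N 11%N.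
have L811 : ell 11 - ell 8 = dl (T 8) (T 11) by sA 7%N 8%N 11%N.
have L911 : ell 11 - ell 9 = dl (T 9) (T 11) by sA 8%N 9%N 11%N.
have L1011 : ell 11 - ell 10 = dl (T 10) (T 11) by sA 9%N 10%N 11%N.
case: i => [|[|[|[|[|[|[|[|[|[|[|[|i]]]]]]]]]]]] //;
case: j => [|[|[|[|[|[|[|[|[|[|[|[|j]]]]]]]]]]]] //.
Qed.

Lemma Lall i j : (i < 12)%N -> (j < 12)%N -> adjn i j -> ell j - ell i = dl (T i) (T j).
Proof.
move=> hi hj /orP[h|h]; first exact: Lor.
have e := Lor hj hi h.
have hji : adjn j i by rewrite /adjn h.
rewrite (dl_anti (T_I4 j) (T_I4 i) (adjT hj hi hji)); lra.
Qed.

Lemma ellmod n : (n < 12)%N -> exists k : int, ell n = T n + 4 * k%:~R.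
Proof.
have m0 : exists k : int, ell 0 = T 0 + 4 * k%:~R by exists 0; rewrite mulr0 addr0.
have mU : forall k, exists j : int, ellU k = T k + 4 * j%:~R.
  by move=> k; apply: (modstep m0).
have m6 : exists j : int, ell 6 = T 6 + 4 * j%:~R by apply: (modstep (mU 1%N)).
case: n => [|[|[|[|[|[|[|[|[|[|[|[|n]]]]]]]]]]]] // _.
- exact: (mU 1%N).
- exact: (mU 2%N).
- exact: (mU 3%N).
- exact: (mU 4%N).
- exact: (mU 5%N).
- exact: (modstep (mU 2%N)).
- exact: (modstep (mU 3%N)).
- exact: (modstep (mU 4%N)).
- exact: (modstep (mU 5%N)).
- exact: (modstep m6).
Qed.

Lemma B1 i c : (i < 12)%N -> (c < 12)%N -> G1 i c -> `|ell i - ell c| <= 1.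
Proof.
move=> hi hc /orP[/eqP->|h]; first by rewrite subrr normr0.
by rewrite distrC (Lall hi hc h); exact: adjT.
Qed.

Lemma B2 i c : (i < 12)%N -> (c < 12)%N -> G2 i c -> `|ell i - ell c| <= 2.
Proof.
move=> hi hc /orP[h|/hasP[b hb /andP[h1 h2]]].
  by have := B1 hi hc h; lra.
have hb12 : (b < 12)%N by move: hb; rewrite mem_iota.
have e1 := B1 hi hb12 (introT orP (or_intror h1)).
have e2 := B1 hb12 hc (introT orP (or_intror h2)).
have := ler_distD (ell b) (ell i) (ell c); lra.
Qed.

Definition Good (r y : R) (a b : nat) :=
  [/\ (a < 12)%N, (b < 12)%N, adjn a b, (exists k : int, y = r + 4 * k%:~R) &
      `|y - ell a| + `|y - ell b| <= 1].

Lemma target (r : R) : (exists z : cP, thp z = r) -> exists y a b, Good r y a b.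
Proof.
case=> z ez.
have [w ew] := H.1 z.
have [a [b [hab hs]]] := Rep H w.
rewrite ew ez in hs.
have ha := ltn_ord a; have hb := ltn_ord b.
have Ta : Th m a = T a by rewrite /T inord_val.
have Tb : Th m b = T b by rewrite /T inord_val.
rewrite Ta Tb in hs.
have Ir : I4 r by rewrite -ez; exact: thp_I4.
exists (ell a + dl (T a) r), a, b; split => //.
- have [k1 e1] := ellmod ha; have [k2 e2] := dl_mod (T a) r.
  by exists (k1 + k2); rewrite e1 e2 intrD; ring.
- have hab' : adjn a b := hab.
  have e := Lall ha hb hab'.
  have n1 := normr_ge0 (dl (T a) r); have n2 := normr_ge0 (dl r (T b)).
  have add := dl_add3 (T_I4 a) Ir (T_I4 b) ltac:(lra) ltac:(lra) (adjT ha hb hab').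
  have -> : ell a + dl (T a) r - ell a = dl (T a) r by ring.
  have -> : ell a + dl (T a) r - ell b = - dl r (T b) by lra.
  by rewrite normrN.
Qed.

Lemma pair3 r1 y1 a1 b1 r2 y2 a2 b2 : Good r1 y1 a1 b1 -> Good r2 y2 a2 b2 ->
  `|y1 - y2| <= 3.
Proof.
move=> [ha1 hb1 h1 _ s1] [ha2 hb2 h2 _ s2].
have hc : Cond a1 b1 a2 b2.
  have m1 : a1 \in r12 by rewrite mem_iota.
  have m2 : b1 \in r12 by rewrite mem_iota.
  have m3 : a2 \in r12 by rewrite mem_iota.
  have m4 : b2 \in r12 by rewrite mem_iota.
  have := allP condall _ m1 => /allP /(_ _ m2) /implyP /(_ h1).
  by move=> /allP /(_ _ m3) /allP /(_ _ m4) /implyP /(_ h2).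
have [p1 p2] := absb (y1 - ell a1); have [p3 p4] := absb (y1 - ell b1).
have [p5 p6] := absb (y2 - ell a2); have [p7 p8] := absb (y2 - ell b2).
rewrite ler_norml; apply/andP.
case/or4P: hc => [h|h|h|/orP[h|/orP[/andP[h h']|/andP[h h']]]].
- have := B1 ha1 ha2 h; rewrite ler_norml => /andP[? ?]; split; lra.
- have := B1 ha1 hb2 h; rewrite ler_norml => /andP[? ?]; split; lra.
- have := B1 hb1 ha2 h; rewrite ler_norml => /andP[? ?]; split; lra.
- have := B1 hb1 hb2 h; rewrite ler_norml => /andP[? ?]; split; lra.
- have := B2 ha1 hb2 h; rewrite ler_norml => /andP[? ?].
  have := B2 hb1 ha2 h'; rewrite ler_norml => /andP[? ?]; split; lra.
- have := B2 ha1 ha2 h; rewrite ler_norml => /andP[? ?].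
  have := B2 hb1 hb2 h'; rewrite ler_norml => /andP[? ?]; split; lra.
Qed.

Lemma contra_main : False.
Proof.
have [t0 t1 t2 t3 t4] := targets R.
have [y0 [a0 [b0 g0]]] := target t0.
have [y1 [a1 [b1 g1]]] := target t1.
have [y2 [a2 [b2 g2]]] := target t2.
have [y3 [a3 [b3 g3]]] := target t3.
have [y4 [a4 [b4 g4]]] := target t4.
have d01 := pair3 g0 g1; have d12 := pair3 g1 g2; have d23 := pair3 g2 g3.
have d34 := pair3 g3 g4; have d04 := pair3 g0 g4.
case: g0 => _ _ _ [k0 e0] _; case: g1 => _ _ _ [k1 e1] _.
case: g2 => _ _ _ [k2 e2] _; case: g3 => _ _ _ [k3 e3] _.
case: g4 => _ _ _ [k4 e4] _.
move: d01 d12 d23 d34 d04; rewrite e0 e1 e2 e3 e4 !ler_norml.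
move=> /andP[? ?] /andP[? ?] /andP[? ?] /andP[? ?] /andP[? ?].
have k10 : k1 = k0 by apply: (int_eq (R:=R)); lra.
have k21 : k2 = k1 by apply: (int_eq (R:=R)); lra.
have k32 : k3 = k2 by apply: (int_eq (R:=R)); lra.
have k43 : k4 = k3 by apply: (int_eq (R:=R)); lra.
subst k1 k2 k3 k4; lra.
Qed.
End Lift.

Theorem theorem2 (R : realType) :
  ~ exists m : mgpoint ico_adj R -> mgpoint cube_adj R,
      isometric_covering (@mg_dist _ ico_adj R) (@mg_dist _ cube_adj R) m.
Proof. by case=> m H; exact: (contra_main H). Qed.
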